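(* Let $n\ge1$ and let $F,G$ be continuous functions with $0<F(r),G(r)<+\infty$ on an interval $(r_i^-,r_i^+)\subset(0,+\infty)$. Set $a(r)=r^n\sqrt{G(r)/F(r)}$ and $b(r)=r^n\sqrt{F(r)/G(r)}$. If $r_i^->0$, the three statements $\int_{r_i^-}\frac{dr}{b(r)}=+\infty$, $\int_{r_i^-}a(r)\,dr=+\infty$ and $\int_{r_i^-}\sqrt{a(r)/b(r)}\,dr=+\infty$ are equivalent. If $r_i^+$ is finite, the three statements $\int^{r_i^+}\frac{dr}{b(r)}=+\infty$, $\int^{r_i^+}a(r)\,dr=+\infty$ and $\int^{r_i^+}\sqrt{a(r)/b(r)}\,dr=+\infty$ are equivalent.
   Context: Notation: $\int_{r_0}f$ means $\int_{r_0}^{r_0+\varepsilon}f$ and $\int^{r_1}f$ means $\int_{r_1-\varepsilon}^{r_1}f$ for small $\varepsilon>0$. *)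

(* Defs.v *)
From HB Require Import structures.
From mathcomp Require Import all_boot all_order all_algebra.
From mathcomp Require Import all_classical all_reals all_analysis.
Set Implicit Arguments. Unset Strict Implicit. Unset Printing Implicit Defensive.
Import Order.TTheory GRing.Theory Num.Theory.
Import numFieldNormedType.Exports.
Local Open Scope classical_set_scope.
Local Open Scope ring_scope.

Definition afun (R : realType) (n : nat) (F G : R -> R) (r : R) : R :=
  r ^+ n * Num.sqrt (G r / F r).
Definition bfun (R : realType) (n : nat) (F G : R -> R) (r : R) : R :=
  r ^+ n * Num.sqrt (F r / G r).

(* \int_{r0} f = +oo : for every small eps > 0,
   \int_{r0}^{r0+eps} f = +oo  (Lebesgue integral of the nonnegative f) *)
Definition int_right_infty (R : realType) (f : R -> R) (r0 : R) : Prop :=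
  \forall e \near 0^'+,
    let I : set R := `]r0, (r0 + e)%R[%classic in
    (\int[lebesgue_measure]_(x in I) (f x)%:E = +oo)%E.

(* \int^{r1} f = +oo : for every small eps > 0,
   \int_{r1-eps}^{r1} f = +oo *)
Definition int_left_infty (R : realType) (f : R -> R) (r1 : R) : Prop :=
  \forall e \near 0^'+,
    let I : set R := `](r1 - e)%R, r1[%classic in
    (\int[lebesgue_measure]_(x in I) (f x)%:E = +oo)%E.

(* Main.v *)
Require Import Defs.
From HB Require Import structures.
From mathcomp Require Import all_boot all_order all_algebra.
From mathcomp Require Import all_classical all_reals all_analysis.
From mathcomp Require Import measurable_realfun.
Import Order.TTheory GRing.Theory Num.Theory.
Import numFieldNormedType.Exports.
Local Open Scope classical_set_scope.
Local Open Scope ring_scope.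

Section K.
Context (R : realType).
Local Notation mu := (@lebesgue_measure R).

Lemma key (I : set R) (u w : R -> R) (c1 c2 : R) :
  open I -> 0 < c1 -> 0 < c2 ->
  (forall x, I x -> 0 <= u x /\ c1 <= w x <= c2) ->
  {in I, continuous u} -> {in I, continuous w} ->
  (\int[mu]_(x in I) (w x * u x)%:E = +oo)%E <->
  (\int[mu]_(x in I) (u x)%:E = +oo)%E.
Proof.
move=> oI c10 c20 hb cu cw.
have mI : measurable I by exact: open_measurable.
have mu_ : measurable_fun I (EFin \o u).
  by apply/measurable_EFinP; exact: open_continuous_measurable_fun.
have mwu : measurable_fun I (EFin \o (w \* u)).
  apply/measurable_EFinP; apply: open_continuous_measurable_fun => // x xI.
  exact: continuousM (cw x xI) (cu x xI).
split => H.
- apply/eqP; rewrite eq_le leey /=.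
  have : (\int[mu]_(x in I) (w x * u x)%:E <= c2%:E * \int[mu]_(x in I) (u x)%:E)%E.
    rewrite -ge0_integralZl_EFin //; last exact: ltW.
    + apply: ge0_le_integral => //.
      * move=> x xI; rewrite lee_fin; have [u0 /andP[h1 _]] := hb x xI.
        by apply: mulr_ge0 => //; apply: le_trans h1; exact: ltW.
      * apply/measurable_EFinP; apply: measurable_funM.
          exact: measurable_cst.
        exact/measurable_EFinP.
      * move=> x xI; rewrite lee_fin; have [u0 /andP[_ h2]] := hb x xI.
        by rewrite ler_wpM2r.
    + by move=> x xI; rewrite lee_fin; case: (hb x xI).
  rewrite H leye_eq => /eqP.
  case: (\int[mu]_(x in I) (u x)%:E)%E => // r; move: r; by rewrite gt0_muleNy.
- apply/eqP; rewrite eq_le leey /=.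
  have : (c1%:E * \int[mu]_(x in I) (u x)%:E <= \int[mu]_(x in I) (w x * u x)%:E)%E.
    rewrite -ge0_integralZl_EFin //; last exact: ltW.
    + apply: ge0_le_integral => //.
      * move=> x xI; rewrite lee_fin; have [u0 _] := hb x xI.
        by apply: mulr_ge0 => //; exact: ltW.
      * apply/measurable_EFinP; apply: measurable_funM.
          exact: measurable_cst.
        exact/measurable_EFinP.
      * move=> x xI; rewrite lee_fin; have [u0 /andP[h1 _]] := hb x xI.
        by rewrite ler_wpM2r.
    + by move=> x xI; rewrite lee_fin; case: (hb x xI).
  by rewrite H gt0_muley ?lte_fin.
Qed.

Lemma near3 (Q P1 P2 P3 : R -> Prop) :
  (\forall e \near 0^'+, Q e) ->
  (forall e, Q e -> [<-> P1 e; P2 e; P3 e]) ->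
  [<-> (\forall e \near 0^'+, P1 e); (\forall e \near 0^'+, P2 e);
       (\forall e \near 0^'+, P3 e)].
Proof.
move=> hQ h; tfae => H; apply: filterS2 hQ H => e qe.
- by move/(h e qe 0%N 1%N).
- by move/(h e qe 1%N 2%N).
- by move/(h e qe 2%N 0%N).
Qed.

Variables (n : nat) (F G : R -> R).
Let s r := Num.sqrt (G r / F r).

Lemma pw r : 0 < r -> 0 < F r -> 0 < G r ->
  [/\ (bfun n F G r)^-1 = (r ^+ n)^-1 * s r,
      afun n F G r = r ^+ n * s r &
      Num.sqrt (afun n F G r / bfun n F G r) = s r].
Proof.
move=> r0 F0 G0.
have e : Num.sqrt (F r / G r) = (s r)^-1.
  by rewrite /s -sqrtrV ?invf_div // divr_ge0 // ltW.
have sp : 0 < s r by rewrite /s sqrtr_gt0 divr_gt0.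
have rn : r ^+ n != 0 by rewrite expf_neq0 // gt_eqF.
rewrite /bfun /afun e; split.
- by rewrite invfM invrK.
- by [].
- rewrite invfM invrK mulrACA mulfV // mul1r -expr2 sqrtr_sqr ger0_norm //.
Qed.

Lemma cont_s r : 0 < F r -> {for r, continuous F} -> {for r, continuous G} ->
  {for r, continuous s}.
Proof.
move=> F0 cF cG; rewrite /s.
apply: (@continuous_comp _ _ _ (fun x => G x / F x) (@Num.sqrt R)).
  apply: continuousM => //; apply: continuousV => //; by rewrite gt_eqF.
exact: sqrt_continuous.
Qed.

Lemma triple (I : set R) (lo hi : R) : open I -> 0 < lo -> lo <= hi ->
  (forall r, I r -> [/\ lo <= r <= hi, 0 < F r, 0 < G r,
     {for r, continuous F} & {for r, continuous G}]) ->
  [<-> (\int[mu]_(x in I) ((bfun n F G x)^-1)%:E = +oo)%E;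
       (\int[mu]_(x in I) (afun n F G x)%:E = +oo)%E;
       (\int[mu]_(x in I) (Num.sqrt (afun n F G x / bfun n F G x))%:E = +oo)%E].
Proof.
move=> oI lo0 lohi hI.
have hi0 : 0 < hi by exact: lt_le_trans lohi.
have pos r : I r -> 0 < r.
  by move=> /hI[/andP[h _] _ _ _ _]; exact: lt_le_trans h.
have cs : {in I, continuous s}.
  by move=> r; rewrite inE => /hI[_ F0 _ cF cG]; exact: cont_s.
have -> : (\int[mu]_(x in I) ((bfun n F G x)^-1)%:E =
    \int[mu]_(x in I) ((x ^+ n)^-1 * s x)%:E)%E.
  apply: eq_integral => x; rewrite inE => xI; have [_ F0 G0 _ _] := hI x xI.
  by case: (pw _ (pos x xI) F0 G0) => ->.
have -> : (\int[mu]_(x in I) (afun n F G x)%:E =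
    \int[mu]_(x in I) (x ^+ n * s x)%:E)%E.
  apply: eq_integral => x; rewrite inE => xI; have [_ F0 G0 _ _] := hI x xI.
  by case: (pw _ (pos x xI) F0 G0) => _ ->.
have -> : (\int[mu]_(x in I) (Num.sqrt (afun n F G x / bfun n F G x))%:E =
    \int[mu]_(x in I) (s x)%:E)%E.
  apply: eq_integral => x; rewrite inE => xI; have [_ F0 G0 _ _] := hI x xI.
  by case: (pw _ (pos x xI) F0 G0) => _ _ ->.
have s0 r : I r -> 0 <= s r by move=> _; exact: sqrtr_ge0.
have k1 := @key I s (fun x => (x ^+ n)^-1) ((hi ^+ n)^-1) ((lo ^+ n)^-1) oI.
have k2 := @key I s (fun x => x ^+ n) (lo ^+ n) (hi ^+ n) oI.
have {k1}k1 : (\int[mu]_(x in I) ((x ^+ n)^-1 * s x)%:E = +oo)%E <->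
    (\int[mu]_(x in I) (s x)%:E = +oo)%E.
  apply: k1.
  - by rewrite invr_gt0 exprn_gt0.
  - by rewrite invr_gt0 exprn_gt0.
  - move=> x xI; split; first exact: s0.
    have [/andP[h1 h2] _ _ _ _] := hI x xI.
    have x0 := pos x xI.
    rewrite !lef_pV2 ?posrE ?exprn_gt0 //.
    by rewrite !lerXn2r ?nnegrE ?(ltW x0) ?(ltW lo0) ?(ltW hi0).
  - exact: cs.
  - move=> x; rewrite inE => /pos x0; apply: (continuousV (s := fun x : R => x ^+ n)).
      by rewrite expf_neq0 // gt_eqF.
    exact: exprn_continuous.
have {k2}k2 : (\int[mu]_(x in I) (x ^+ n * s x)%:E = +oo)%E <->
    (\int[mu]_(x in I) (s x)%:E = +oo)%E.
  apply: k2.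
  - by rewrite exprn_gt0.
  - by rewrite exprn_gt0.
  - move=> x xI; split; first exact: s0.
    have [/andP[h1 h2] _ _ _ _] := hI x xI.
    have x0 := pos x xI.
    by rewrite !lerXn2r ?nnegrE ?(ltW x0) ?(ltW lo0) ?(ltW hi0).
  - exact: cs.
  - move=> x _; exact: exprn_continuous.
by tfae => [/k1/k2|/k2|/k1].
Qed.
End K.

Theorem lemma5p4 (R : realType) (n : nat) (F G : R -> R)
    (rm : R) (rp : \bar R) :
  (0 < n)%N ->
  0 <= rm -> (rm%:E < rp)%E ->
  (forall r : R, (rm%:E < r%:E < rp)%E -> {for r, continuous F}) ->
  (forall r : R, (rm%:E < r%:E < rp)%E -> {for r, continuous G}) ->
  (forall r : R, (rm%:E < r%:E < rp)%E -> 0 < F r /\ 0 < G r) ->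
  (0 < rm ->
     [<-> int_right_infty (fun r => (bfun n F G r)^-1) rm;
          int_right_infty (afun n F G) rm;
          int_right_infty (fun r => Num.sqrt (afun n F G r / bfun n F G r)) rm])
  /\
  ((rp < +oo)%E ->
     [<-> int_left_infty (fun r => (bfun n F G r)^-1) (fine rp);
          int_left_infty (afun n F G) (fine rp);
          int_left_infty (fun r => Num.sqrt (afun n F G r / bfun n F G r)) (fine rp)]).

Proof.
move=> n0 rm0 rmrp cF cG FG0; split.
- move=> rmpos; rewrite /int_right_infty.
  apply: (@near3 _ (fun e => 0 < e /\ ((rm + e)%:E < rp)%E)).
    near=> e; split; first by near: e; exact: nbhs_right_gt.
    near: e; case: rp rmrp {cF cG FG0} => [p||] //= rmp.
      have : 0 < p - rm by rewrite subr_gt0 -lte_fin.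
      move=> /nbhs_right_lt; apply: filterS => e ep.
      by rewrite lte_fin -ltrBrDl.
    by apply: filterS (nbhs_right_gt 0) => x _; exact: ltey.
  move=> e [e0 erp].
  apply: (@triple _ n F G _ rm (rm + e)).
  - exact: interval_open.
  - exact: rmpos.
  - by rewrite lerDl ltW.
  - move=> r /=; rewrite in_itv /= => /andP[h1 h2].
    have hr : (rm%:E < r%:E < rp)%E.
      by rewrite lte_fin h1 /=; apply: lt_trans erp; rewrite lte_fin.
    have [F0 G0] := FG0 r hr.
    by split => //; [rewrite (ltW h1) (ltW h2)|exact: cF|exact: cG].
- move=> rpfin; rewrite /int_left_infty.
  case: rp rmrp rpfin cF cG FG0 => [p||] //= rmp _ cF cG FG0.
  have rmp' : rm < p by rewrite -lte_fin.
  apply: (@near3 _ (fun e => 0 < e /\ e < p - rm)).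
    near=> e; split; first by near: e; exact: nbhs_right_gt.
    by near: e; apply: nbhs_right_lt; rewrite subr_gt0.
  move=> e [e0 ep].
  have hlo : rm < p - e by rewrite ltrBrDl -ltrBrDr.
  apply: (@triple _ n F G _ (p - e) p).
  - exact: interval_open.
  - exact: le_lt_trans hlo.
  - by rewrite lerBlDr lerDl ltW.
  - move=> r /=; rewrite in_itv /= => /andP[h1 h2].
    have hr : (rm%:E < r%:E < p%:E)%E.
      by rewrite !lte_fin h2 andbT; exact: lt_trans h1.
    have [F0 G0] := FG0 r hr.
    by split => //; [rewrite (ltW h1) (ltW h2)|exact: cF|exact: cG].
Unshelve. all: by end_near.
Qed.
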